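(* Let $\ell,\tilde\ell\in\mathcal{D}^-[0,\infty)$ and $r,\tilde r\in\mathcal{D}^+[0,\infty)$ with $\tilde\ell\le\ell$, $r\le\tilde r$ and $\inf_{t\ge0}(r(t)-\ell(t))>0$. Given $\psi\in\mathcal{D}[0,\infty)$, let $(\eta_\ell,\eta_r)$ and $(\eta_{\tilde\ell},\eta_{\tilde r})$ be the constraining processes associated with the SP for $\psi$ on $[\ell(\cdot),r(\cdot)]$ and on $[\tilde\ell(\cdot),\tilde r(\cdot)]$, respectively. Then for every $t\ge0$, $\eta_r(t)\ge\eta_{\tilde r}(t)$ and $\eta_\ell(t)\ge\eta_{\tilde\ell}(t)$.
   Context: $\mathcal{D}[0,\infty)$ denotes the càdlàg functions $[0,\infty)\to(-\infty,\infty)$; $\mathcal{D}^-[0,\infty)$ (resp. $\mathcal{D}^+[0,\infty)$) denotes càdlàg functions with values in $[-\infty,\infty)$ (resp. $(-\infty,\infty]$). SP: $(\phi,\eta)\in\mathcal{D}[0,\infty)^2$ solves the SP on $[\ell(\cdot),r(\cdot)]$ for $\psi$ if (1) $\phi(t)=\psi(t)+\eta(t)\in[\ell(t),r(t)]$ for all $t\ge0$; (2) $\eta=\eta_\ell-\eta_r$ with $\eta_\ell,\eta_r$ non-decreasing and $\int_0^\infty \mathbb{I}_{\{\phi(s)>\ell(s)\}}\,d\eta_\ell(s)=0$, $\int_0^\infty \mathbb{I}_{\{\phi(s)<r(s)\}}\,d\eta_r(s)=0$. The pair $(\eta_\ell,\eta_r)$ is called the pair of constraining processes associated with the SP. When $\inf_t(r(t)-\ell(t))>0$,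 the SP has a unique solution for every $\psi\in\mathcal{D}[0,\infty)$. *)

(* Defs.v *)
From HB Require Import structures.
From mathcomp Require Import all_boot all_order all_algebra.
From mathcomp Require Import all_classical all_reals all_analysis.
Set Implicit Arguments. Unset Strict Implicit. Unset Printing Implicit Defensive.
Import Order.TTheory GRing.Theory Num.Theory.
Import numFieldNormedType.Exports.
Local Open Scope classical_set_scope.
Local Open Scope ring_scope.

Section Defs.
Context {R : realType}.

(** f : [0,oo) -> R is cadlag (only values at t >= 0 matter):
    right-continuous at every t >= 0, left limits (in R) at every t > 0. *)
Definition cadlag (f : R -> R) : Prop :=
  (forall t, 0 <= t -> f x @[x --> t^'+] --> f t) /\
  (forall t, 0 < t -> exists l : R, f x @[x --> t^'-] --> l).

Definition cadlag_ext (P : \bar R -> Prop) (f : R -> \bar R) : Prop :=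
  (forall t, 0 <= t -> P (f t)) /\
  (forall t, 0 <= t -> f x @[x --> t^'+] --> f t) /\
  (forall t, 0 < t -> exists l : \bar R, P l /\ f x @[x --> t^'-] --> l).

Definition Dminus (f : R -> \bar R) : Prop := cadlag_ext (fun x => x <> +oo%E) f.
Definition Dplus (f : R -> \bar R) : Prop := cadlag_ext (fun x => x <> -oo%E) f.

(** extension of a function on [0,oo) by 0 on (-oo,0), i.e. eta(0-) = 0 *)
Definition ext0 (eta : R -> R) : R -> R := fun x => if x < 0 then 0 else eta x.

(** [int_{[0,oo)} 1_A d eta = 0] for a non-decreasing right-continuous eta
    (with the convention eta(0-) = 0): the Lebesgue-Stieltjes measure of
    the extended function vanishes on A. The existence of [F] also
    expresses that [ext0 eta] is non-decreasing and right-continuous. *)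
Definition LS_null (eta : R -> R) (A : set R) : Prop :=
  exists F : cumulative R R,
    (forall x, F x = ext0 eta x) /\ lebesgue_stieltjes_measure F A = 0%E.

Definition SP_solution (l r : R -> \bar R) (psi phi eta etal etar : R -> R)
  : Prop :=
  cadlag phi /\ cadlag eta /\
  (forall t, 0 <= t -> phi t = psi t + eta t) /\
  (forall t, 0 <= t -> (l t <= (phi t)%:E)%E /\ ((phi t)%:E <= r t)%E) /\
  (forall t, 0 <= t -> eta t = etal t - etar t) /\
  (0 <= etal 0 /\ {in `[0, +oo[ &, {homo etal : x y / x <= y}}) /\
  (0 <= etar 0 /\ {in `[0, +oo[ &, {homo etar : x y / x <= y}}) /\
  LS_null etal [set s | 0 <= s /\ (l s < (phi s)%:E)%E] /\
  LS_null etar [set s | 0 <= s /\ ((phi s)%:E < r s)%E].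

End Defs.

(* Main.v *)
Require Import Defs.
From HB Require Import structures.
From mathcomp Require Import all_boot all_order all_algebra.
From mathcomp Require Import all_classical all_reals all_analysis.
From mathcomp Require Import lra.
Import Order.TTheory GRing.Theory Num.Theory.
Import numFieldNormedType.Exports.

Section S.
Local Open Scope classical_set_scope.
Local Open Scope ring_scope.
Context {R : realType}.

Lemma LS_itv (F : cumulative R R) (a b : R) : a <= b ->
  lebesgue_stieltjes_measure F `]a, b] = (F b - F a)%:E.
Proof.
move=> ab; rewrite /lebesgue_stieltjes_measure /measure_extension measurable_mu_extE/=; last exact: is_ocitv.
by rewrite wlength_itv_bnd.
Qed.

Lemma LS_mono (F : cumulative R R) (A B : set R) : A `<=` B ->
  (lebesgue_stieltjes_measure F A <= lebesgue_stieltjes_measure F B)%E.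
Proof.
by move=> AB; rewrite /lebesgue_stieltjes_measure /measure_extension; apply: le_mu_ext.
Qed.

Lemma LS_cont (F : cumulative R R) (u s : R) : u <= s ->
  lebesgue_stieltjes_measure F `[u, s] = 0%E ->
  forall e, 0 < e -> exists2 a, a < u & F s - F a <= e.
Proof.
move=> us H0 e e0.
have ip : forall n : nat, 0 < n.+1%:R^-1 :> R by move=> n; rewrite invr_gt0 ltr0n.
pose G (n : nat) := `](u - n.+1%:R^-1), s]%classic.
have mG : forall n, measurable (G n) by move=> n; exact: measurable_itv.
have capG : \bigcap_n G n = `[u, s]%classic.
  apply/seteqP; split => x /=.
  - move=> Hx; rewrite in_itv /=; move: (Hx 0%N I); rewrite /G /= in_itv /= => /andP[_ ->].
    rewrite andbT; rewrite leNgt; apply/negP => xu.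
    have [k Hk] := ltr_add_invr xu.
    move: (Hx k I); rewrite /G /= in_itv /= => /andP[h _]; move: Hk h; set y := (k.+1%:R^-1); move: y => y Hk h; rewrite ltrBlDr in h; have := lt_trans h Hk; by rewrite ltxx.
  - rewrite in_itv /= => /andP[ux xs] n _; rewrite /G /= in_itv /= xs andbT.
    by rewrite ltrBlDr (le_lt_trans ux)// ltrDl ip.
have E0 : lebesgue_stieltjes_measure F (\bigcap_n G n) = 0%E by rewrite capG; exact: H0.
have cv : (fun n => lebesgue_stieltjes_measure F (G n)) @ \oo --> lebesgue_stieltjes_measure F (\bigcap_n G n).
  apply: nonincreasing_cvg_mu.
  - change (lebesgue_stieltjes_measure F (G 0%N) < +oo)%E.
    rewrite /G LS_itv ?ltry//.
    have := ip 0%N; lra.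
  - move=> n; exact: mG.
  - rewrite capG; exact: measurable_itv.
  - move=> n m nm; apply/subsetPset => x; rewrite /G /= !in_itv /= => /andP[h ->]; rewrite andbT.
    have : m.+1%:R^-1 <= n.+1%:R^-1 :> R.
      by rewrite lef_pV2 ?posrE ?ltr0n// ler_nat.
    by move=> mn; apply: le_lt_trans h; rewrite lerD2l lerN2.
rewrite E0 in cv.
have e0' : (0 < e%:E)%E by rewrite lte_fin.
have [N _ HN] := cv _ (open_ereal_lt' e0').
have := HN N (leqnn N); rewrite /= /G.
have := ip N; move: (N.+1%:R^-1) => y yp.
rewrite LS_itv; last by lra.
rewrite lte_fin => h; exists (u - y); last exact: ltW.
by lra.
Qed.
Lemma LS_null0 {B A : set R} {F : cumulative R R} :
  lebesgue_stieltjes_measure F B = 0%E -> A `<=` B -> lebesgue_stieltjes_measure F A = 0%E.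
Proof.
move=> FB AB; apply/eqP; rewrite eq_le measure_ge0 andbT -FB; exact: LS_mono.
Qed.

Lemma noneg (eta et : R -> R) (B : set R) (s : R) :
  0 <= eta 0 -> (forall x y, 0 <= x -> x <= y -> eta x <= eta y) ->
  LS_null et B -> 0 <= s ->
  (forall w, 0 <= w -> w <= s -> eta w - et w < 0 -> B w) -> 0 <= eta s - et s.
Proof.
move=> e0 mono [F [FE FB]] s0 HB.
have Fmono : forall x y, x <= y -> F x <= F y.
  by move=> x y; apply: (cumulative_is_nondecreasing F).
pose P := [set w | w <= s /\ (w < 0 \/ 0 <= eta w - et w)].
have P0 : P (-1) by split; [lra | left; lra].
have hsP : has_sup P by split; [exists (-1) | exists s => w [ws _]].
have Pub : forall w, P w -> w <= sup P by move=> w Pw; exact: sup_upper_bound.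
have us : sup P <= s by apply: ge_sup; [exists (-1) | move=> w []].
have notP : forall x, sup P < x -> x <= s -> B x.
  move=> x ux xs; have nPx : ~ P x by move=> /Pub; rewrite leNgt ux.
  have x0 : 0 <= x by rewrite leNgt; apply/negP => x0; apply: nPx; split => //; left.
  apply: HB => //; rewrite ltNge; apply/negP => h; apply: nPx; split => //; by right.
have key : forall e, 0 < e -> exists2 w, P w & F s - F w <= e.
  move=> e epos; have [Pu|nPu] := pselect (P (sup P)).
  - exists (sup P) => //.
    have : lebesgue_stieltjes_measure F `](sup P), s] = 0%E.
      apply: (LS_null0 FB) => z /=; rewrite in_itv /= => /andP[h1 h2]; exact: notP.
    rewrite LS_itv // => /eqP; rewrite eqe subr_eq0 => /eqP ->; lra.
  - have u0 : 0 <= sup P by rewrite leNgt; apply/negP => h; apply: nPu; split => //; left.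
    have Bu : B (sup P).
      apply: HB => //; rewrite ltNge; apply/negP => h; apply: nPu; split => //; by right.
    have : lebesgue_stieltjes_measure F `[(sup P), s] = 0%E.
      apply: (LS_null0 FB) => z /=; rewrite in_itv /= => /andP[h1 h2].
      move: h1; rewrite le_eqVlt => /orP[/eqP <- //|h1]; exact: notP.
    move=> /(@LS_cont F _ _ us) /(_ e epos) [a au Ha].
    have [w Pw aw] := sup_gt (ex_intro _ (-1) P0) au.
    exists w => //; have := Fmono _ _ (ltW aw); lra.
rewrite leNgt; apply/negP => Zs.
have [w [ws Pw] Hw] := key (- (eta s - et s) / 2) ltac:(lra).
have Fs : F s = et s by rewrite FE /ext0 ltNge s0.
have es := mono 0 s (lexx 0) s0.
case: (ltP w 0) => w0.
- have Fw : F w = 0 by rewrite FE /ext0 w0.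
  lra.
- have Fw : F w = et w by rewrite FE /ext0 ltNge w0.
  have := mono w s w0 ws.
  case: Pw => Pw; lra.
Qed.

Lemma rnbhs_lt (f : R -> R) (g : R -> \bar R) t :
  f x @[x --> t^'+] --> f t -> g x @[x --> t^'+] --> g t -> ((f t)%:E < g t)%E ->
  exists2 d, 0 < d & forall w, t <= w -> w < t + d -> ((f w)%:E < g w)%E.
Proof.
move=> Hf Hg fg.
have [m fm mg] : exists2 m : R, f t < m & (m%:E < g t)%E.
  move: fg; case: (g t) => [gt | |] //= h.
  - exists ((f t + gt) / 2); rewrite ?lte_fin in h *; lra.
  - by exists (f t + 1); [lra | rewrite ltry].
have h1 : \forall x \near t^'+, f x < m by exact: (cvgr_lt (f t) Hf m fm).
have h2 : \forall x \near t^'+, (m%:E < g x)%E := Hg _ (open_ereal_gt' mg).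
have := filterI h1 h2.
move=> h3; have : \forall x \near t, t < x -> (f x < m /\ (m%:E < g x)%E) by exact: h3.
move=> /nbhs_ballP [d d0 hd].
exists d => // w tw wd.
have key : f w < m /\ (m%:E < g w)%E.
  move: tw; rewrite le_eqVlt => /orP[/eqP <- //|tw].
  apply: hd => //; rewrite /ball /= distrC ger0_norm; [lra | by rewrite subr_ge0 ltW].
case: key => k1 k2; apply: lt_trans k2; by rewrite lte_fin.
Qed.
Lemma rnbhs_gt (f : R -> R) (g : R -> \bar R) t :
  f x @[x --> t^'+] --> f t -> g x @[x --> t^'+] --> g t -> (g t < (f t)%:E)%E ->
  exists2 d, 0 < d & forall w, t <= w -> w < t + d -> (g w < (f w)%:E)%E.
Proof.
move=> Hf Hg fg.
have [m fm mg] : exists2 m : R, m < f t & (g t < m%:E)%E.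
  move: fg; case: (g t) => [gt | |] //= h.
  - exists ((f t + gt) / 2); rewrite ?lte_fin in h *; lra.
  - by exists (f t - 1); [lra | rewrite ltNye].
have h1 : \forall x \near t^'+, m < f x by exact: (cvgr_gt (f t) Hf m fm).
have h2 : \forall x \near t^'+, (g x < m%:E)%E := Hg _ (open_ereal_lt' mg).
have := filterI h1 h2.
move=> h3; have : \forall x \near t, t < x -> (m < f x /\ (g x < m%:E)%E) by exact: h3.
move=> /nbhs_ballP [d d0 hd].
exists d => // w tw wd.
have key : m < f w /\ (g w < m%:E)%E.
  move: tw; rewrite le_eqVlt => /orP[/eqP <- //|tw].
  apply: hd => //; rewrite /ball /= distrC ger0_norm; [lra | by rewrite subr_ge0 ltW].
case: key => k1 k2; apply: lt_trans k2 _; by rewrite lte_fin.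
Qed.
Lemma gap_false (a b : \bar R) (x c : R) : 0 < c -> (c%:E <= b - a)%E ->
  (a <= x%:E)%E -> (x%:E <= b)%E -> (b <= a)%E -> False.
Proof.
move=> c0; case: a => [a| |]; case: b => [b| |] //=; rewrite ?lee_fin.
- move=> h _ _ ba; lra.
Qed.

Lemma mono_of (h : R -> R) : {in `[0, +oo[%R &, {homo h : x y / x <= y}} ->
  forall x y, 0 <= x -> x <= y -> h x <= h y.
Proof.
move=> hm x y x0 xy; apply: hm => //; rewrite in_itv /= andbT //; exact: le_trans xy.
Qed.
End S.
Arguments noneg {R eta et B s}.
Arguments rnbhs_lt {R f g t}.
Arguments rnbhs_gt {R f g t}.

Local Open Scope ring_scope.

Theorem proposition3p3 (R : realType) (l lt r rt : R -> \bar R)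
  (psi phi eta etal etar phit etat etalt etart : R -> R) :
  Dminus l -> Dminus lt -> Dplus r -> Dplus rt ->
  (forall t, 0 <= t -> (lt t <= l t)%E) ->
  (forall t, 0 <= t -> (r t <= rt t)%E) ->
  (exists c : R, 0 < c /\ forall t, 0 <= t -> (c%:E <= r t - l t)%E) ->
  cadlag psi ->
  SP_solution l r psi phi eta etal etar ->
  SP_solution lt rt psi phit etat etalt etart ->
  forall t, 0 <= t -> etart t <= etar t /\ etalt t <= etal t.
Proof.
move=> Dl Dlt Dr Drt ltl rrt [c [c0 gap]] cpsi SP SPt.
case: SP => cphi [ceta [Hphi [Hbd [Heta [[l0 lmono] [[r0 rmono] [LSl LSr]]]]]]].
case: SPt => cphit [cetat [Hphit [Hbdt [Hetat [[lt0 ltmono] [[rt0 rtmono] [LSlt LSrt]]]]]]].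
move/mono_of: lmono => lmono; move/mono_of: rmono => rmono.
pose X w := etar w - etart w.
pose Y w := etal w - etalt w.
have Hdiff : forall w, 0 <= w -> phi w - phit w = Y w - X w.
  by move=> w w0; rewrite Hphi // Hphit // Heta // Hetat // /X /Y; lra.
pose S : set R := fun w => 0 <= w /\ (X w < 0 \/ Y w < 0).
suff nS : forall w, ~ S w.
  move=> t t0; have : ~ S t := nS t.
  rewrite /S /X /Y => h; split; rewrite -subr_ge0 leNgt; apply/negP => h'; apply: h; split => //.
  - by left.
  - by right.
move=> w0 Sw0.
have S0 : exists w, S w by exists w0.
have hlS : has_lbound S by exists 0 => w [].
pose tau := inf S.
have tau0 : 0 <= tau by apply: lb_le_inf => // w [].
have below : forall w, 0 <= w -> w < tau -> 0 <= X w /\ 0 <= Y w.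
  move=> w w0' wt.
  have nSw : ~ S w by move=> /(ge_inf hlS) h; move: wt; rewrite ltNge h.
  split; rewrite leNgt; apply/negP => h; apply: nSw; split => //; [left | right] => //.
have gaptau : ((phit tau)%:E < rt tau)%E \/ (lt tau < (phit tau)%:E)%E.
  have [h1|h1] := ltP ((phit tau)%:E) (rt tau); first by left.
  have [h2|h2] := ltP (lt tau) ((phit tau)%:E); first by right.
  exfalso; apply: (@gap_false R (l tau) (r tau) (phi tau) c c0 (gap tau tau0)).
  - exact: (Hbd tau tau0).1.
  - exact: (Hbd tau tau0).2.
  - apply: le_trans (rrt tau tau0) _; apply: le_trans h1 _; apply: le_trans h2 _.
    exact: ltl.
case: gaptau => htau.
- have [d d0 Hd] := rnbhs_lt (cphit.1 tau tau0) (Drt.2.1 tau tau0) htau.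
  have [v Sv vlt] : exists2 v, S v & v < tau + d by apply: inf_lt => //; rewrite /tau; lra.
  have vtau : tau <= v by exact: ge_inf hlS _ Sv.
  have HX : forall w, 0 <= w -> w <= v -> 0 <= X w.
    move=> w w0' wv; apply: (noneg r0 rmono LSrt w0') => w' w'0 w'w Xneg.
    split => //; have [h|h] := ltP w' tau.
    + by exfalso; have := (below w' w'0 h).1; rewrite /X; lra.
    + by apply: Hd => //; lra.
  have HY : forall w, 0 <= w -> w <= v -> 0 <= Y w.
    move=> w w0' wv; apply: (noneg l0 lmono LSlt w0') => w' w'0 w'w Yneg.
    split => //.
    have hx := HX w' w'0 (le_trans w'w wv).
    have hd := Hdiff w' w'0.
    apply: le_lt_trans (ltl w' w'0) _; apply: le_lt_trans (Hbd w' w'0).1 _.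
    by rewrite lte_fin; rewrite /Y in hd; lra.
  case: Sv => v0 [Xv|Yv].
  + by have := HX v v0 (lexx v); lra.
  + by have := HY v v0 (lexx v); lra.
- have [d d0 Hd] := rnbhs_gt (cphit.1 tau tau0) (Dlt.2.1 tau tau0) htau.
  have [v Sv vlt] : exists2 v, S v & v < tau + d by apply: inf_lt => //; rewrite /tau; lra.
  have vtau : tau <= v by exact: ge_inf hlS _ Sv.
  have HY : forall w, 0 <= w -> w <= v -> 0 <= Y w.
    move=> w w0' wv; apply: (noneg l0 lmono LSlt w0') => w' w'0 w'w Yneg.
    split => //; have [h|h] := ltP w' tau.
    + by exfalso; have := (below w' w'0 h).2; rewrite /Y; lra.
    + by apply: Hd => //; lra.
  have HX : forall w, 0 <= w -> w <= v -> 0 <= X w.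
    move=> w w0' wv; apply: (noneg r0 rmono LSrt w0') => w' w'0 w'w Xneg.
    split => //.
    have hy := HY w' w'0 (le_trans w'w wv).
    have hd := Hdiff w' w'0.
    apply: lt_le_trans (rrt w' w'0); apply: lt_le_trans (Hbd w' w'0).2.
    by rewrite lte_fin; rewrite /X in hd; lra.
  case: Sv => v0 [Xv|Yv].
  + by have := HX v v0 (lexx v); lra.
  + by have := HY v v0 (lexx v); lra.
Qed.
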